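(* The equation $x\cdot y^{-1}+u\cdot v^{-1}=(x\cdot v+u\cdot y)\cdot(y\cdot v)^{-1}$ is derivable in equational logic from $\mathsf{Md}_\bot$.
   Context: The signature has one sort, constants $0,1,\bot$, binary operations $+,\cdot$ and unary operations $-$ and $(\,\cdot\,)^{-1}$; $^{-1}$ binds stronger than $\cdot$, which binds stronger than $+$. $\mathsf{Md}_\bot$ is the set of equations (variables universally quantified): $(x+y)+z=x+(y+z)$; $x+y=y+x$; $x+0=x$; $x+(-x)=0\cdot x$; $(x\cdot y)\cdot z=x\cdot(y\cdot z)$; $x\cdot y=y\cdot x$; $1\cdot x=x$; $x\cdot(y+z)=x\cdot y+x\cdot z$; $-(-x)=x$; $0\cdot(x\cdot x)=0\cdot x$; $(x^{-1})^{-1}=x+0\cdot x^{-1}$; $x\cdot x^{-1}=1+0\cdot x^{-1}$; $(x\cdot y)^{-1}=x^{-1}\cdot y^{-1}$; $1^{-1}=1$; $0^{-1}=\bot$; $x+\bot=\bot$; $x\cdot\bot=\bot$. *)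

(* Defs.v *)
From Stdlib Require Import List.
Import ListNotations.

Inductive term : Type :=
  | Var  : nat -> term
  | Zero : term
  | One  : term
  | Bot  : term
  | Add  : term -> term -> term
  | Mul  : term -> term -> term
  | Opp  : term -> term
  | Inv  : term -> term.

Fixpoint subst (s : nat -> term) (t : term) : term :=
  match t with
  | Var n => s n
  | Zero => Zero
  | One => One
  | Bot => Bot
  | Add a b => Add (subst s a) (subst s b)
  | Mul a b => Mul (subst s a) (subst s b)
  | Opp a => Opp (subst s a)
  | Inv a => Inv (subst s a)
  end.

Inductive derivable (E : term -> term -> Prop) : term -> term -> Prop :=
  | d_ax    : forall l r, E l r -> derivable E l r
  | d_refl  : forall t, derivable E t t
  | d_sym   : forall s t, derivable E s t -> derivable E t s
  | d_trans : forall s t u, derivable E s t -> derivable E t u -> derivable E s u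
  | d_subst : forall (sg : nat -> term) s t,
      derivable E s t -> derivable E (subst sg s) (subst sg t)
  | d_add   : forall s1 t1 s2 t2, derivable E s1 t1 -> derivable E s2 t2 ->
      derivable E (Add s1 s2) (Add t1 t2)
  | d_mul   : forall s1 t1 s2 t2, derivable E s1 t1 -> derivable E s2 t2 ->
      derivable E (Mul s1 s2) (Mul t1 t2)
  | d_opp   : forall s t, derivable E s t -> derivable E (Opp s) (Opp t)
  | d_inv   : forall s t, derivable E s t -> derivable E (Inv s) (Inv t).

Definition vx := Var 0.
Definition vy := Var 1.
Definition vz := Var 2.

Definition Md_bot_list : list (term * term) := [
  (Add (Add vx vy) vz, Add vx (Add vy vz));
  (Add vx vy, Add vy vx);
  (Add vx Zero, vx);
  (Add vx (Opp vx), Mul Zero vx);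
  (Mul (Mul vx vy) vz, Mul vx (Mul vy vz));
  (Mul vx vy, Mul vy vx);
  (Mul One vx, vx);
  (Mul vx (Add vy vz), Add (Mul vx vy) (Mul vx vz));
  (Opp (Opp vx), vx);
  (Mul Zero (Mul vx vx), Mul Zero vx);
  (Inv (Inv vx), Add vx (Mul Zero (Inv vx)));
  (Mul vx (Inv vx), Add One (Mul Zero (Inv vx)));
  (Inv (Mul vx vy), Mul (Inv vx) (Inv vy));
  (Inv One, One);
  (Inv Zero, Bot);
  (Add vx Bot, Bot);
  (Mul vx Bot, Bot)
].

Definition Md_bot (l r : term) : Prop := In (l, r) Md_bot_list.

(* Main.v *)
Require Import Defs.
From Stdlib Require Import Setoid Morphisms.
From Stdlib Require List.
Import Defs.

Definition eqv := derivable Md_bot.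
Infix "==" := eqv (at level 70).

#[local] Instance eqv_equiv : Equivalence eqv.
Proof. split; red; unfold eqv; intros; [apply d_refl|apply d_sym; auto|eapply d_trans; eauto]. Qed.
#[local] Instance add_prop : Proper (eqv ==> eqv ==> eqv) Add.
Proof. intros ? ? ? ? ? ?; apply d_add; auto. Qed.
#[local] Instance mul_prop : Proper (eqv ==> eqv ==> eqv) Mul.
Proof. intros ? ? ? ? ? ?; apply d_mul; auto. Qed.
#[local] Instance inv_prop : Proper (eqv ==> eqv) Inv.
Proof. intros ? ? ?; apply d_inv; auto. Qed.

Definition sg3 (a b c : term) (n : nat) : term :=
  match n with 0 => a | 1 => b | _ => c end.

Lemma ax_inst l r sg : Md_bot l r -> subst sg l == subst sg r.
Proof. intro H; apply d_subst, d_ax, H. Qed.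

Ltac axi l r a b c := apply (ax_inst l r (sg3 a b c)); unfold Md_bot; simpl; tauto.

Lemma addA a b c : Add (Add a b) c == Add a (Add b c).
Proof. axi (Add (Add vx vy) vz) (Add vx (Add vy vz)) a b c. Qed.
Lemma addC a b : Add a b == Add b a.
Proof. axi (Add vx vy) (Add vy vx) a b a. Qed.
Lemma add0 a : Add a Zero == a.
Proof. axi (Add vx Zero) vx a a a. Qed.
Lemma mulA a b c : Mul (Mul a b) c == Mul a (Mul b c).
Proof. axi (Mul (Mul vx vy) vz) (Mul vx (Mul vy vz)) a b c. Qed.
Lemma mulC a b : Mul a b == Mul b a.
Proof. axi (Mul vx vy) (Mul vy vx) a b a. Qed.
Lemma mul1 a : Mul One a == a.
Proof. axi (Mul One vx) vx a a a. Qed.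
Lemma mulDr a b c : Mul a (Add b c) == Add (Mul a b) (Mul a c).
Proof. axi (Mul vx (Add vy vz)) (Add (Mul vx vy) (Mul vx vz)) a b c. Qed.
Lemma mul0sq a : Mul Zero (Mul a a) == Mul Zero a.
Proof. axi (Mul Zero (Mul vx vx)) (Mul Zero vx) a a a. Qed.
Lemma mulV a : Mul a (Inv a) == Add One (Mul Zero (Inv a)).
Proof. axi (Mul vx (Inv vx)) (Add One (Mul Zero (Inv vx))) a a a. Qed.
Lemma invM a b : Inv (Mul a b) == Mul (Inv a) (Inv b).
Proof. axi (Inv (Mul vx vy)) (Mul (Inv vx) (Inv vy)) a b a. Qed.

Lemma mulDl a b c : Mul (Add a b) c == Add (Mul a c) (Mul b c).
Proof. rewrite mulC, mulDr, (mulC c a), (mulC c b). reflexivity. Qed.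

Lemma K1 p q : Add (Mul Zero p) (Mul Zero (Mul p q)) == Mul Zero (Mul p q).
Proof.
  rewrite <- (mulA Zero p q), (mulC Zero p), (mulA p Zero q).
  rewrite <- mulDr. rewrite (addC Zero), add0. reflexivity.
Qed.

Lemma K1' p q : Add (Mul Zero q) (Mul Zero (Mul p q)) == Mul Zero (Mul p q).
Proof. rewrite (mulC p q). apply K1. Qed.

Lemma idem r : Add (Mul Zero r) (Mul Zero r) == Mul Zero r.
Proof. rewrite <- mulDl, add0. reflexivity. Qed.

Lemma L p q : Add (Mul Zero p) (Mul Zero q) == Mul Zero (Mul p q).
Proof.
  rewrite <- mulDr, <- mul0sq, mulDr, !mulDl, !mulDr, !mul0sq.
  rewrite (mulC q p), K1, (addC (Mul Zero (Mul p q)) (Mul Zero q)), K1'. apply idem.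
Qed.

Lemma P1 a b : Add (Mul a b) (Mul Zero a) == Mul a b.
Proof. rewrite (mulC Zero a), <- mulDr, add0. reflexivity. Qed.
Lemma P2 a b : Add (Mul a b) (Mul Zero b) == Mul a b.
Proof. rewrite <- mulDl, add0. reflexivity. Qed.

Lemma W a b c : Mul (Mul a b) (Mul Zero c) ==
  Add (Mul Zero a) (Add (Mul Zero b) (Mul Zero c)).
Proof.
  rewrite mulC, mulA, (mulC c (Mul a b)), <- L, <- L, addA. reflexivity.
Qed.

Lemma mulACA a b c d : Mul (Mul a b) (Mul c d) == Mul (Mul a c) (Mul b d).
Proof.
  rewrite !mulA, <- (mulA b c d), (mulC b c), (mulA c b d). reflexivity.
Qed.

Lemma addACA a b c d : Add (Add a b) (Add c d) == Add (Add a d) (Add c b).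
Proof.
  rewrite !addA, (addC c d), <- (addA b d c), (addC b d), (addA d b c), (addC b c).
  reflexivity.
Qed.

Theorem proposition2p2 :
  derivable Md_bot
    (Add (Mul (Var 0) (Inv (Var 1))) (Mul (Var 2) (Inv (Var 3))))
    (Mul (Add (Mul (Var 0) (Var 3)) (Mul (Var 2) (Var 1)))
         (Inv (Mul (Var 1) (Var 3)))).
Proof.
  change (eqv (Add (Mul (Var 0) (Inv (Var 1))) (Mul (Var 2) (Inv (Var 3))))
    (Mul (Add (Mul (Var 0) (Var 3)) (Mul (Var 2) (Var 1)))
         (Inv (Mul (Var 1) (Var 3))))).
  symmetry.
  set (x := Var 0). set (y := Var 1). set (u := Var 2). set (v := Var 3).
  rewrite invM, mulDl, (mulACA x v), (mulC (Inv y) (Inv v)), (mulACA u y).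
  rewrite !mulV, !mulDr, !(mulC _ One), !mul1, !W.
  rewrite <- (addA (Mul x (Inv y))).
  rewrite P1.
  rewrite <- (addA (Mul x (Inv y))).
  rewrite P2.
  rewrite <- (addA (Mul u (Inv v))).
  rewrite P1.
  rewrite <- (addA (Mul u (Inv v))).
  rewrite P2.
  rewrite addACA, P2, P2. reflexivity.
Qed.
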